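(* Let $\mathcal{R}=(G_0,e\to R)$ be an expanding replacement system with limit space $X$ and rearrangement group $\mathcal{G}$. Then every finite subgroup of $\mathcal{G}$ is contained in $\mathrm{Aut}_{\mathcal{R}}(E)$ for some expansion $E$ of $G_0$.
   Context: A graph means a finite directed multigraph (loops, multiple edges allowed); isomorphisms preserve directions. A replacement system $\mathcal{R}=(G_0,e\to R)$: $G_0$ a graph, $e$ a non-loop directed edge from $v$ to $w$, $R$ a graph containing $v,w$ (initial and terminal vertices). Replacing an edge $\varepsilon$ of a graph means deleting it and gluing in a copy of $R$ with initial/terminal vertices identified with those of $\varepsilon$; new edges are named $\varepsilon\zeta$ ($\zeta\in E(R)$). An expansion of $G_0$ is a graph obtained by finitely many replacements; its edges are words $\varepsilon_0\varepsilon_1\cdots\varepsilon_n$. $G_n$ denotes the graph obtained by replacing all edges $n$ times. $\mathcal{R}$ is expanding if neither $G_0$ nor $R$ has isolated vertices, the initial and terminal vertices of $R$ are not adjacent, and $R$ has at least three vertices and two edges. $\Omega=E(G_0)\times E(R)^{\mathbb{N}}$; $\varepsilon_0\varepsilon_1\cdots\sim\varepsilon'_0\varepsilon'_1\cdots$ iff for all $n$ the edges $\varepsilon_0\cdots\varepsilon_n$ and $\varepsilon'_0\cdots\varepsilon'_n$ of $G_n$ share a vertex; $X=\Omega/\sim$. The cell $C(e')$ of an edge $e'$ of an expansion is the image of all sequences with prefix $e'$; its interior excludes the (images of the) endpoints of $e'$. For $e',e''$ both loops or both non-loops, the canonical homeomorphism $C(e')\to C(e'')$ is induced by $e'\zeta_1\zeta_2\cdots\mapsto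 e''\zeta_1\zeta_2\cdots$. A rearrangement of $X$ is a homeomorphism $X\to X$ restricting to a canonical homeomorphism on each cell of some finite cover of $X$ by cells with disjoint interiors; $\mathcal{G}$ is the group of all rearrangements. For an expansion $E$ of $G_0$, $\mathrm{Aut}_{\mathcal{R}}(E)$ is the subgroup of $\mathcal{G}$ consisting of all rearrangements $f$ for which there is a directed graph automorphism $\varphi$ of $E$ such that $f$ maps $C(\epsilon)$ canonically onto $C(\varphi(\epsilon))$ for each edge $\epsilon$ of $E$. *)

(* Defs.v *)
From mathcomp Require Import all_boot.
Set Implicit Arguments.
Unset Strict Implicit.
Unset Printing Implicit Defensive.

Record graph := Graph {
  gV : finType;
  gE : finType;
  gsrc : gE -> gV;
  gtgt : gE -> gV }.

(* A replacement system (G0, e -> R): ini/ter are the initial and terminal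
   vertices v, w of R (the endpoints of the formal edge e). *)
Record repl_system := RSys {
  G0 : graph;
  Rg : graph;
  ini : gV Rg;
  ter : gV Rg }.

Section ReplacementSystem.
Variable RS : repl_system.

Local Notation E0 := (gE (G0 RS)).
Local Notation V0 := (gV (G0 RS)).
Local Notation ER := (gE (Rg RS)).
Local Notation VR := (gV (Rg RS)).

(* e is a non-loop edge: v <> w *)
Definition is_repl_system : Prop := ini RS <> ter RS.

Definition expanding : Prop :=
  is_repl_system /\
  (forall v : V0, exists e : E0, gsrc e = v \/ gtgt e = v) /\
  (forall v : VR, exists z : ER, gsrc z = v \/ gtgt z = v) /\
  (forall z : ER, ~ (gsrc z = ini RS /\ gtgt z = ter RS) /\
                  ~ (gsrc z = ter RS /\ gtgt z = ini RS)) /\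
  (3 <= #|VR|) /\ (2 <= #|ER|).

(* Edges of expansions are words e0 z1 ... zn. *)
Definition word := (E0 * seq ER)%type.

(* Vertices of expansions: vertices of G0, or the copy of an (interior)
   vertex u of R glued in when replacing the edge w. *)
Definition vtx := (V0 + (word * VR))%type.

(* endpoint (b = false: source, b = true: target) of the word e0 (rev rzs) *)
Fixpoint ep_rev (e0 : E0) (rzs : seq ER) (b : bool) : vtx :=
  match rzs with
  | [::] => inl (if b then gtgt e0 else gsrc e0)
  | z :: r =>
      let u := if b then gtgt z else gsrc z in
      if u == ini RS then ep_rev e0 r false
      else if u == ter RS then ep_rev e0 r true
      else inr ((e0, rev r), u)
  end.

Definition ep (w : word) (b : bool) : vtx := ep_rev w.1 (rev w.2) b.

Definition is_loop (w : word) : Prop := ep w false = ep w true.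

Definition share_vertex (w w' : word) : Prop :=
  exists b b', ep w b = ep w' b'.

Definition Omega := (E0 * (nat -> ER))%type.

(* the edge eps_0 eps_1 ... eps_n of G_n *)
Definition pref (om : Omega) (n : nat) : word := (om.1, mkseq om.2 n).

Definition sim (om om' : Omega) : Prop :=
  forall n, share_vertex (pref om n) (pref om' n).

Definition cls (om : Omega) : Omega -> Prop := fun om' => sim om om'.

Definition X := { A : Omega -> Prop | exists om, A = cls om }.

Definition proj (om : Omega) : X := exist _ (cls om) (ex_intro _ om erefl).

(* product topology on Omega (discrete factors) and quotient topology on X *)
Definition agree (n : nat) (om om' : Omega) : Prop :=
  om.1 = om'.1 /\ forall i, i < n -> om.2 i = om'.2 i.

Definition openO (U : Omega -> Prop) : Prop :=
  forall om, U om -> exists n, forall om', agree n om om' -> U om'.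

Definition openX (U : X -> Prop) : Prop := openO (fun om => U (proj om)).

Definition continuousX (f : X -> X) : Prop :=
  forall U, openX U -> openX (fun x => U (f x)).

Definition homeoX (f : X -> X) : Prop :=
  exists g : X -> X, (forall x, g (f x) = x) /\ (forall x, f (g x) = x) /\
    continuousX f /\ continuousX g.

Definition hasprefix (om : Omega) (w : word) : Prop := pref om (size w.2) = w.

Definition cell (w : word) (x : X) : Prop :=
  exists om, hasprefix om w /\ x = proj om.

(* x is the image in X of the vertex p *)
Definition vertex_point (p : vtx) (x : X) : Prop :=
  exists om, x = proj om /\ exists m, forall n, m <= n ->
    ep (pref om n) false = p \/ ep (pref om n) true = p.

Definition interior (w : word) (x : X) : Prop :=
  cell w x /\ forall b, ~ vertex_point (ep w b) x.

(* the canonical map on sequences: w z1 z2 ... |-> w' z1 z2 ... *)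
Definition canon (w w' : word) (om : Omega) : Omega :=
  (w'.1, fun i => if i < size w'.2 then nth (om.2 0) w'.2 i
                  else om.2 (i - size w'.2 + size w.2)).

Definition canon_on (f : X -> X) (w w' : word) : Prop :=
  (is_loop w <-> is_loop w') /\
  forall om, hasprefix om w -> f (proj om) = proj (canon w w' om).

Definition rearrangement (f : X -> X) : Prop :=
  homeoX f /\
  exists cov : seq (word * word),
    (forall x, exists c, c \in cov /\ cell c.1 x) /\
    (forall c1 c2 s1 s2 s3, cov = s1 ++ c1 :: s2 ++ c2 :: s3 ->
       forall x, ~ (interior c1.1 x /\ interior c2.1 x)) /\
    (forall c, c \in cov -> canon_on f c.1 c.2).

(* expansions of G0, given by their edge sets *)
Inductive expansion : seq word -> Prop :=
| exp0 : expansion [seq (e, [::]) | e <- enum E0]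
| expS (S : seq word) (w : word) : expansion S -> w \in S ->
    expansion ([seq w' <- S | w' != w] ++ [seq (w.1, rcons w.2 z) | z <- enum ER]).

Definition is_vtx (S : seq word) (p : vtx) : Prop :=
  match p with
  | inl _ => True
  | inr (w, u) => u <> ini RS /\ u <> ter RS /\
      exists w', w' \in S /\ w'.1 = w.1 /\ size w.2 < size w'.2 /\
                 take (size w.2) w'.2 = w.2
  end.

Definition bij_on (T : Type) (P : T -> Prop) (s : T -> T) : Prop :=
  exists s' : T -> T, forall t, P t ->
    P (s t) /\ P (s' t) /\ s' (s t) = t /\ s (s' t) = t.

(* directed graph automorphism of the expansion with edge set S,
   given by its edge map sigma (and some vertex map tau) *)
Definition graph_aut (S : seq word) (sigma : word -> word) : Prop :=
  exists tau : vtx -> vtx,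
    bij_on (fun w => w \in S) sigma /\ bij_on (is_vtx S) tau /\
    forall w, w \in S -> forall b, ep (sigma w) b = tau (ep w b).

Definition in_Aut (S : seq word) (f : X -> X) : Prop :=
  rearrangement f /\
  exists sigma, graph_aut S sigma /\
    forall w, w \in S -> forall om, hasprefix om w ->
      f (proj om) = proj (canon w (sigma w) om).

End ReplacementSystem.

(* Main.v *)
Require Import Defs.
From mathcomp Require Import all_boot.
From Stdlib Require Import Classical ClassicalEpsilon FunctionalExtensionality PropExtensionality ProofIrrelevance.
Set Implicit Arguments. Unset Strict Implicit. Unset Printing Implicit Defensive.

Section Basics.
Variable RS : repl_system.
Local Notation E0 := (gE (G0 RS)).
Local Notation ER := (gE (Rg RS)).
Local Notation VR := (gV (Rg RS)).
Local Notation wrd := (word RS).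
Local Notation ep := (@ep RS).

Definition ext (w : wrd) (s : seq ER) : wrd := (w.1, w.2 ++ s).

Definition endp (z : ER) (b : bool) : VR := if b then gtgt z else gsrc z.

Definition stepv (w : wrd) (z : ER) (b : bool) : vtx RS :=
  if endp z b == ini RS then ep w false
  else if endp z b == ter RS then ep w true else inr (w, endp z b).

Lemma ep_rcons w z b : ep (w.1, rcons w.2 z) b = stepv w z b.
Proof.
rewrite /ep /stepv /endp /= rev_rcons /= revK -surjective_pairing.
by case: b.
Qed.

Lemma ep_ext1 w z b : ep (ext w [:: z]) b = stepv w z b.
Proof. by rewrite /ext cats1 ep_rcons. Qed.

Lemma ep_nil e b : ep (e, [::]) b = inl (if b then gtgt e else gsrc e).
Proof. by []. Qed.

Lemma ep_born w b p u : ep w b = inr (p, u) ->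
  p.1 = w.1 /\ (exists z s, w.2 = p.2 ++ z :: s) /\ u != ini RS /\ u != ter RS.
Proof.
case: w => e s; elim/last_ind: s b => [|s z IH] b //=.
rewrite (ep_rcons (e, s)) /stepv.
case: ifP => [_|Hi]; first by move/IH => [-> [[z' [s' /= ->]] H]];
  split => //; split => //; exists z', (rcons s' z); by rewrite rcons_cat.
case: ifP => [_|Ht]; first by move/IH => [-> [[z' [s' /= ->]] H]];
  split => //; split => //; exists z', (rcons s' z); by rewrite rcons_cat.
move=> [<- <-] /=; split => //; split; last by rewrite Hi Ht.
by exists z, [::]; rewrite cats1.
Qed.

Lemma ep_born_size w b p u : ep w b = inr (p, u) -> size p.2 < size w.2.
Proof.
move/ep_born => [_ [[z [s ->]] _]]; by rewrite size_cat /= addnS ltnS leq_addr.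
Qed.

Lemma ep_anc w b v n : ep w b = v -> n <= size w.2 ->
  (exists b', ep (w.1, take n w.2) b' = v) \/
  (exists p u, v = inr (p, u) /\ n <= size p.2 /\ take n w.2 = take n p.2 /\ w.1 = p.1).
Proof.
case: w => e s; elim/last_ind: s b n => [|s z IH] b n /=.
  rewrite leqn0 => <- /eqP ->; left; by exists b.
rewrite size_rcons => Hv Hn.
case: (ltngtP n (size s).+1) Hn => // Hn _; last first.
  left; exists b; by rewrite Hn take_oversize ?size_rcons.
have Hn' : n <= size s by [].
have Ht : take n (rcons s z) = take n s by rewrite -cats1 takel_cat.
rewrite Ht; move: Hv; rewrite (ep_rcons (e, s)) /stepv.
case: ifP => _; first by by move/IH => /(_ n Hn').
case: ifP => _; first by by move/IH => /(_ n Hn').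
move=> <-; right; exists (e, s), (endp z b); by split.
Qed.


Local Notation Om := (Omega RS).

Definition seqapp (s : seq ER) (t : nat -> ER) : nat -> ER :=
  fun i => if i < size s then nth (t 0) s i else t (i - size s).

Definition app (w : wrd) (t : nat -> ER) : Om := (w.1, seqapp w.2 t).

Definition shift (om : Om) (k : nat) : nat -> ER := fun i => om.2 (i + k).

Lemma mkseq_add (T : Type) (f : nat -> T) a b :
  mkseq f (a + b) = mkseq f a ++ mkseq (fun i => f (a + i)) b.
Proof.
apply: (@eq_from_nth _ (f 0)); first by rewrite size_cat !size_mkseq.
move=> i; rewrite size_mkseq => Hi.
rewrite nth_mkseq // nth_cat size_mkseq; case: ifP => Hia; first by rewrite nth_mkseq.
rewrite nth_mkseq ?subnKC //; first by rewrite leqNgt Hia.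
by rewrite ltn_subLR // leqNgt Hia.
Qed.

Lemma seqapp_cat s1 s2 t : seqapp (s1 ++ s2) t = seqapp s1 (seqapp s2 t).
Proof.
apply: functional_extensionality => i; rewrite /seqapp size_cat nth_cat.
case H1: (i < size s1).
  by rewrite (ltn_addr (size s2) H1) (set_nth_default (t 0)).
have H1' : size s1 <= i by rewrite leqNgt H1.
rewrite -(ltn_subLR _ H1').
case: ifP => H2 //.
by rewrite subnDA.
Qed.

Lemma app_ext w s t : app (ext w s) t = app w (seqapp s t).
Proof. by rewrite /app /ext /= seqapp_cat. Qed.

Lemma mkseq_seqapp s t k : mkseq (seqapp s t) (size s + k) = s ++ mkseq t k.
Proof.
rewrite mkseq_add; congr (_ ++ _).
  apply: (@eq_from_nth _ (t 0)); first by rewrite size_mkseq.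
  move=> i; rewrite size_mkseq => Hi; by rewrite nth_mkseq // /seqapp Hi.
apply: eq_mkseq => i; by rewrite /seqapp ltnNge leq_addr /= addKn.
Qed.

Lemma pref_app_ge w t n : size w.2 <= n ->
  pref (app w t) n = ext w (mkseq t (n - size w.2)).
Proof.
move=> H; rewrite /pref /app /ext /= -{1}(subnKC H) mkseq_seqapp //.
Qed.

Lemma pref_app_le w t n : n <= size w.2 -> pref (app w t) n = (w.1, take n w.2).
Proof.
move=> H; rewrite /pref /app /=; congr (_, _).
apply: (@eq_from_nth _ (t 0)); first by rewrite size_mkseq size_take_min (minn_idPl H).
move=> i; rewrite size_mkseq => Hi.
by rewrite nth_mkseq // nth_take // /seqapp (leq_trans Hi H).
Qed.

Lemma pref_app_size w t : pref (app w t) (size w.2) = w.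
Proof. by rewrite pref_app_le // take_size -surjective_pairing. Qed.

Lemma hasprefix_app w t : hasprefix (app w t) w.
Proof. exact: pref_app_size. Qed.

Lemma hasprefix_eq om w : hasprefix om w -> om = app w (shift om (size w.2)).
Proof.
rewrite /hasprefix /pref; case: om => e f; case: w => e' s /= [<- Hw].
rewrite /app /=; congr (_, _); apply: functional_extensionality => i.
rewrite /seqapp /shift; case: ifP => Hi; last by rewrite subnK // leqNgt Hi.
by rewrite -[in RHS]Hw nth_mkseq.
Qed.

Lemma shift_app w t : shift (app w t) (size w.2) = t.
Proof.
apply: functional_extensionality => i.
by rewrite /shift /app /seqapp /= ltnNge leq_addl /= addnK.
Qed.

Lemma canon_app w w' t : canon w w' (app w t) = app w' t.
Proof.
rewrite /canon /app /=; congr (_, _); apply: functional_extensionality => i.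
rewrite /seqapp; case: ifP => Hi; first by rewrite (set_nth_default (t 0)).
by rewrite ltnNge leq_addl /= addnK.
Qed.


Lemma sim_refl (om : Om) : sim om om.
Proof. by move=> n; exists false, false. Qed.

Lemma sim_sym (om om' : Om) : sim om om' -> sim om' om.
Proof. move=> H n; have [b [b' E]] := H n; by exists b', b. Qed.

Lemma proj_eq_sim (om om' : Om) : proj om = proj om' -> sim om om'.
Proof.
move=> H; have : cls om = cls om' by move: (f_equal (@proj1_sig _ _) H).
move=> E; have : cls om' om' by exact: sim_refl.
by rewrite -E.
Qed.

Lemma pref_S (om : Om) n : pref om n.+1 = ext (pref om n) [:: om.2 n].
Proof. by rewrite /pref /ext /= mkseqS cats1. Qed.

Lemma size_pref (om : Om) n : size (pref om n).2 = n.
Proof. by rewrite size_mkseq. Qed.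

Lemma stepv_cases w z b :
  (endp z b = ini RS /\ stepv w z b = ep w false) \/
  (endp z b = ter RS /\ stepv w z b = ep w true) \/
  (endp z b <> ini RS /\ endp z b <> ter RS /\ stepv w z b = inr (w, endp z b)).
Proof.
rewrite /stepv; case: eqP => Hi; first by left.
case: eqP => Ht; first by right; left.
by right; right.
Qed.

Lemma inherit A B z z' b b' : size A.2 = size B.2 -> A <> B ->
  ep (ext A [:: z]) b = ep (ext B [:: z']) b' ->
  (endp z b = ini RS \/ endp z b = ter RS) /\
  exists b1, ep (ext A [:: z]) b = ep A b1.
Proof.
move=> Hs HAB; rewrite !ep_ext1.
have HB : forall b2, inr (A, endp z b) <> ep B b2.
  move=> b2 E; have := ep_born_size (esym E); by rewrite Hs ltnn.
case: (stepv_cases A z b) => [[H1 ->]|[[H1 ->]|[_ [_ ->]]]].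
- move=> _; split; [by left| by exists false].
- move=> _; split; [by right| by exists true].
case: (stepv_cases B z' b') => [[_ ->]|[[_ ->]|[_ [_ ->]]]].
- by move/HB.
- by move/HB.
by case.
Qed.

Lemma proj_exist (P : (Om -> Prop) -> Prop) A B (pa : P A) (pb : P B) :
  A = B -> exist P A pa = exist P B pb.
Proof. move=> E; subst; f_equal; apply: proof_irrelevance. Qed.

End Basics.

Section Trans.
Variable RS : repl_system.
Local Notation ER := (gE (Rg RS)).
Local Notation wrd := (word RS).
Local Notation ep := (@ep RS).
Local Notation Om := (Omega RS).
Hypothesis Hna : forall z : ER, ~ (gsrc z = ini RS /\ gtgt z = ter RS) /\
                  ~ (gsrc z = ter RS /\ gtgt z = ini RS).
Hypothesis Hit : ini RS <> ter RS.

Lemma sim_trans (a b c : Om) : sim a b -> sim b c -> sim a c.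
Proof.
move=> Hab Hbc n.
case: (classic (pref a n = pref b n)) => Eab.
  rewrite Eab; exact: Hbc.
case: (classic (pref b n = pref c n)) => Ebc.
  rewrite -Ebc; exact: Hab.
have [x1 [x2 Hx]] := Hab n.+1; rewrite !pref_S in Hx.
have [y1 [y2 Hy]] := Hbc n.+1; rewrite !pref_S in Hy.
have Hs : forall u v : Om, size (pref u n).2 = size (pref v n).2 by move=> u v; rewrite !size_pref.
have [_ [a1 Ea]] := inherit (Hs _ _) Eab Hx.
have [Hzx [b1 Eb]] := inherit (Hs _ _) (fun E => Eab (esym E)) (esym Hx).
have [Hzy [b2 Eb2]] := inherit (Hs _ _) Ebc Hy.
have [_ [c2 Ec]] := inherit (Hs _ _) (fun E => Ebc (esym E)) (esym Hy).
case: (classic (ep (ext (pref b n) [:: b.2 n]) x2 = ep (ext (pref b n) [:: b.2 n]) y1)) => Exy.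
  exists a1, c2; by rewrite -Ea Hx Exy Hy Ec.
exfalso; move: Exy Hzx Hzy; rewrite !ep_ext1.
set z := b.2 n.
have Hsame : gsrc z = gtgt z -> stepv (pref b n) z false = stepv (pref b n) z true.
  by rewrite /stepv /endp => ->.
move: Hsame; clear -Hna; move=> Hsame.
case: x2 => //; case: y1 => //=; rewrite /endp.
- move=> Hne [Ht|Ht] [Hs'|Hs'].
  + by apply: Hne; symmetry; apply: Hsame; rewrite Ht Hs'.
  + by case: (Hna z) => _ H; apply: H.
  + by case: (Hna z) => H _; apply: H.
  + by apply: Hne; symmetry; apply: Hsame; rewrite Ht Hs'.
- move=> Hne [Ht|Ht] [Hs'|Hs'].
  + by apply: Hne; apply: Hsame; rewrite Ht Hs'.
  + by case: (Hna z) => H _; apply: H.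
  + by case: (Hna z) => _ H; apply: H.
  + by apply: Hne; apply: Hsame; rewrite Ht Hs'.
Qed.

Lemma sim_proj (om om' : Om) : sim om om' -> proj om = proj om'.
Proof.
move=> H; apply: proj_exist; apply: functional_extensionality => x.
apply: propositional_extensionality; rewrite /cls; split => Hx.
  exact: sim_trans (sim_sym H) Hx.
exact: sim_trans H Hx.
Qed.

End Trans.

Section Rigid.
Variable RS : repl_system.
Local Notation ER := (gE (Rg RS)).
Local Notation VR := (gV (Rg RS)).
Local Notation wrd := (word RS).
Local Notation ep := (@ep RS).
Local Notation Om := (Omega RS).
Hypothesis Hna : forall z : ER, ~ (gsrc z = ini RS /\ gtgt z = ter RS) /\
                  ~ (gsrc z = ter RS /\ gtgt z = ini RS).
Hypothesis Hit : ini RS <> ter RS.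

Definition roleV (c : bool) : VR := if c then ter RS else ini RS.

Variables (zc y : ER) (c : bool).
Hypothesis Hzc : endp zc c <> ini RS /\ endp zc c <> ter RS.
Hypothesis Hy : endp y false = roleV c \/ endp y true = roleV c.

Lemma ext_cat (w : wrd) s1 s2 : ext (ext w s1) s2 = ext w (s1 ++ s2).
Proof. by rewrite /ext /= catA. Qed.

Lemma y_ini b1 : endp y b1 = ini RS -> c = false.
Proof.
case: c Hy => //; rewrite /roleV /endp => Hy' Hb; exfalso.
case: b1 Hb Hy' => /= Hb [Hq|Hq].
- case: (Hna y) => _ H; by apply: H.
- apply: Hit; by rewrite -Hb -Hq.
- apply: Hit; by rewrite -Hb -Hq.
- case: (Hna y) => H _; by apply: H.
Qed.

Lemma y_ter b1 : endp y b1 = ter RS -> c = true.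
Proof.
case: c Hy => //; rewrite /roleV /endp => Hy' Hb; exfalso.
case: b1 Hb Hy' => /= Hb [Hq|Hq].
- case: (Hna y) => H _; by apply: H.
- apply: Hit; by rewrite -Hb -Hq.
- apply: Hit; by rewrite -Hb -Hq.
- case: (Hna y) => _ H; by apply: H.
Qed.

Lemma kill (W : wrd) b : exists p u, ep (ext W [:: zc; y; zc]) b = inr (p, u) /\
  size W.2 <= size p.2.
Proof.
have -> : ext W [:: zc; y; zc] = ext (ext (ext W [:: zc]) [:: y]) [:: zc] by rewrite !ext_cat.
rewrite ep_ext1.
have K1 : forall b2, endp y b2 = ini RS \/ endp y b2 = ter RS -> exists p u,
   ep (ext W [:: zc]) (if endp y b2 == ini RS then false else true) = inr (p, u) /\
  size W.2 <= size p.2.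
  move=> b2 Hb2; rewrite ep_ext1.
  have -> : (if endp y b2 == ini RS then false else true) = c.
    case: eqP => [/y_ini -> //|Hn]; case: Hb2 => [//|/y_ter -> //].
  case: (stepv_cases W zc c) => [[H _]|[[H _]|[_ [_ ->]]]].
  - by case: Hzc.
  - by case: Hzc.
  by exists W, (endp zc c).
have K2 : forall b1, exists p u, ep (ext (ext W [:: zc]) [:: y]) b1 = inr (p, u) /\
  size W.2 <= size p.2.
  move=> b1; rewrite ep_ext1.
  case: (stepv_cases (ext W [:: zc]) y b1) => [[H ->]|[[H ->]|[_ [_ ->]]]].
  - have := K1 b1 (or_introl H); by rewrite H eqxx.
  - have := K1 b1 (or_intror H); rewrite H.
    by case: eqP => // E; exfalso; apply: Hit.
  exists (ext W [:: zc]), (endp y b1); split => //; by rewrite /ext size_cat leq_addr.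
case: (stepv_cases (ext (ext W [:: zc]) [:: y]) zc b) => [[H ->]|[[H ->]|[_ [_ ->]]]].
- exact: K2.
- exact: K2.
exists (ext (ext W [:: zc]) [:: y]), (endp zc b); split => //.
by rewrite /ext !size_cat -addnA leq_addr.
Qed.

Definition patt : nat -> ER := fun i => if i %% 3 == 1 then y else zc.

Lemma mkseq_patt k : mkseq patt (3 * k.+1) = mkseq patt (3 * k) ++ [:: zc; y; zc].
Proof.
rewrite mulnS addnC mkseq_add; congr (_ ++ _).
rewrite /mkseq /= /patt.
by rewrite !(mulnC 3) !modnMDl.
Qed.

Definition rigid (om : Om) := forall om', sim om om' -> om' = om.

Lemma young_rigid (om : Om) :
  (forall K, exists n, forall b, exists p u, ep (pref om n) b = inr (p, u) /\ K <= size p.2) ->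
  rigid om.
Proof.
move=> HY om' Hs.
have key : forall i, om'.1 = om.1 /\ om'.2 i = om.2 i.
  move=> i; have [n Hn] := HY i.+1.
  have [b [b' E]] := Hs n.
  have [p [u [E1 Hp]]] := Hn b.
  have E2 := E1; rewrite E in E2.
  have [Ha1 [[z [s Ha2]] _]] := ep_born E1.
  have [Hb1 [[z' [s' Hb2]] _]] := ep_born E2.
  split; first by rewrite /= in Ha1 Hb1; rewrite -Hb1 Ha1.
  have Hin : i < n.
    have := ep_born_size E1; rewrite size_pref => H; exact: ltn_trans Hp H.
  have := f_equal (nth (om.2 0) ^~ i) Ha2.
  have := f_equal (nth (om.2 0) ^~ i) Hb2.
  rewrite /pref /= !nth_mkseq // !nth_cat Hp => -> ->.
  exact: set_nth_default.
case: om' Hs key => e f Hs key; case: om Hs key HY => e0 f0 _ key _.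
have [/= -> _] := key 0; congr (_, _); apply: functional_extensionality => i.
by case: (key i).
Qed.

Lemma rigid_app (W : wrd) : rigid (app W patt).
Proof.
apply: young_rigid => K; exists (size W.2 + 3 * K.+1) => b.
rewrite pref_app_ge ?leq_addr // addKn mkseq_patt -ext_cat.
have [p [u [E Hp]]] := kill (ext W (mkseq patt (3 * K))) b.
exists p, u; split => //; apply: leq_trans Hp.
rewrite /ext size_cat size_mkseq; apply: leq_trans (leq_addl _ _).
by rewrite leq_pmull.
Qed.

End Rigid.

Section Tail.
Variable RS : repl_system.
Local Notation ER := (gE (Rg RS)).
Local Notation VR := (gV (Rg RS)).
Local Notation wrd := (word RS).
Local Notation ep := (@ep RS).
Local Notation Om := (Omega RS).
Hypothesis Hna : forall z : ER, ~ (gsrc z = ini RS /\ gtgt z = ter RS) /\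
                  ~ (gsrc z = ter RS /\ gtgt z = ini RS).
Hypothesis Hit : ini RS <> ter RS.

Lemma touch z q q' s s' : endp z q = roleV RS s -> endp z q' = roleV RS s' -> s = s'.
Proof.
case: s; case: s' => //; case: q; case: q' => //= H1 H2; exfalso;
  try (apply: Hit; by rewrite -H1 -H2).
all: case: (Hna z) => Ha Hb; rewrite /endp /roleV in H1 H2;
  first [apply: Ha; by split | apply: Hb; by split].
Qed.

Variable zI : bool -> ER.
Hypothesis HzI : forall b, endp (zI b) false = roleV RS b \/ endp (zI b) true = roleV RS b.

Definition qq b := if endp (zI b) false == roleV RS b then false else true.

Lemma qq_spec b : endp (zI b) (qq b) = roleV RS b.
Proof. rewrite /qq; case: eqP => // Hn; case: (HzI b) => // H; by exfalso; apply: Hn. Qed.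

Definition st b0 k := iter k qq b0.
Definition TT b0 : nat -> ER := fun k => zI (st b0 k).

Lemma ext_nil (w : wrd) : ext w [::] = w.
Proof. by rewrite /ext cats0 -surjective_pairing. Qed.

Lemma ext_mkseqS (w : wrd) f k : ext w (mkseq f k.+1) = ext (ext w (mkseq f k)) [:: f k].
Proof. by rewrite mkseqS -cats1 ext_cat. Qed.

Lemma stepv_role w s : stepv w (zI s) (qq s) = ep w s.
Proof.
rewrite /stepv qq_spec /roleV; case: s => //.
case: eqP => [E|_]; [by exfalso; apply: Hit | by rewrite eqxx].
by rewrite eqxx.
Qed.

Lemma tailV (w : wrd) b0 k : ep (ext w (mkseq (TT b0) k)) (st b0 k) = ep w b0.
Proof.
elim: k => [|k IH]; first by rewrite ext_nil.
by rewrite ext_mkseqS ep_ext1 /TT /st iterS stepv_role.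
Qed.

Lemma tail_ends (w : wrd) b0 k b : ep (ext w (mkseq (TT b0) k.+1)) b = ep w b0 \/
  exists u, ep (ext w (mkseq (TT b0) k.+1)) b = inr (ext w (mkseq (TT b0) k), u).
Proof.
case: (eqVneq b (st b0 k.+1)) => [->|Hb]; first by left; exact: tailV.
rewrite ext_mkseqS ep_ext1 /TT.
case: (stepv_cases (ext w (mkseq (TT b0) k)) (zI (st b0 k)) b)
  => [[H ->]|[[H ->]|[_ [_ ->]]]]; last by right; eexists.
- left; have H' : endp (zI (st b0 k)) b = roleV RS false by [].
  have := touch (qq_spec (st b0 k)) H' => E.
  have := tailV w b0 k; by rewrite E.
- left; have H' : endp (zI (st b0 k)) b = roleV RS true by [].
  have := touch (qq_spec (st b0 k)) H' => E.
  have := tailV w b0 k; by rewrite E.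
Qed.

Lemma size_ext (w : wrd) s : size (ext w s).2 = size w.2 + size s.
Proof. by rewrite /ext size_cat. Qed.

Lemma conv_unique (u1 u2 : wrd) b1 b2 :
  sim (app u1 (TT b1)) (app u2 (TT b2)) -> ep u1 b1 = ep u2 b2.
Proof.
move=> Hs; set m := maxn (size u1.2) (size u2.2).
have Hm1 : size u1.2 <= m by rewrite leq_maxl.
have Hm2 : size u2.2 <= m by rewrite leq_maxr.
have P1 : forall j, pref (app u1 (TT b1)) (m + j) = ext u1 (mkseq (TT b1) (m - size u1.2 + j)).
  move=> j; by rewrite pref_app_ge ?(leq_trans Hm1 (leq_addr _ _)) // addnC -addnBA // addnC.
have P2 : forall j, pref (app u2 (TT b2)) (m + j) = ext u2 (mkseq (TT b2) (m - size u2.2 + j)).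
  move=> j; by rewrite pref_app_ge ?(leq_trans Hm2 (leq_addr _ _)) // addnC -addnBA // addnC.
have Hv1 : forall p u, ep u1 b1 = inr (p, u) -> size p.2 < m.
  move=> p u /ep_born_size H; exact: leq_trans H Hm1.
have Hv2 : forall p u, ep u2 b2 = inr (p, u) -> size p.2 < m.
  move=> p u /ep_born_size H; exact: leq_trans H Hm2.
have [β1 [β2 E]] := Hs (m + 2).
rewrite P1 P2 !addn2 in E.
case: (tail_ends u1 b1 (m - size u1.2).+1 β1) => [E1|[x1 E1]];
case: (tail_ends u2 b2 (m - size u2.2).+1 β2) => [E2|[x2 E2]].
- by rewrite -E1 -E2.
- exfalso; have := Hv1 _ _ (etrans (etrans (esym E1) E) E2).
  by rewrite size_ext size_mkseq addnS subnKC // ltnNge leqnSn.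
- exfalso; have := Hv2 _ _ (etrans (etrans (esym E2) (esym E)) E1).
  by rewrite size_ext size_mkseq addnS subnKC // ltnNge leqnSn.
rewrite E1 E2 in E.
have /= EQ := f_equal (fun v => match v with inr (p, _) => p | inl _ => u1 end) E.
have T1 := tailV u1 b1 (m - size u1.2).+1.
rewrite EQ in T1.
case: (tail_ends u2 b2 (m - size u2.2) (st b1 (m - size u1.2).+1)) => [E3|[x3 E3]].
  by rewrite -T1 E3.
exfalso; rewrite E3 in T1.
have := Hv1 _ _ (esym T1).
by rewrite size_ext size_mkseq subnKC // ltnn.
Qed.

Lemma sim_conv (w w' : wrd) b b' : ep w b = ep w' b' ->
  sim (app w (TT b)) (app w' (TT b')).
Proof.
move=> Hv n; have [v Ev] : exists v, v = ep w b by eexists.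
rewrite -Ev in Hv.
have Conv : forall (u : wrd) bu, ep u bu = v ->
  (exists β, ep (pref (app u (TT bu)) n) β = v) \/
  (exists p x, v = inr (p, x) /\ n <= size p.2 /\ pref (app u (TT bu)) n = (p.1, take n p.2)).
  move=> u bu Hu; case: (leqP (size u.2) n) => Hn.
    left; exists (st bu (n - size u.2)); rewrite (pref_app_ge _ Hn).
    by rewrite -Hu; apply: tailV.
  rewrite (pref_app_le _ (ltnW Hn)).
  case: (ep_anc Hu (ltnW Hn)) => [[β Hβ]|[p [x [Ev0 [Hpn [Ht He]]]]]]; first by left; exists β.
  right; exists p, x; by rewrite Ht He.
case: (Conv w b (esym Ev)) => [[β1 H1]|[p1 [x1 [Ev1 [Hn1 Hp1]]]]];
case: (Conv w' b' (esym Hv)) => [[β2 H2]|[p2 [x2 [Ev2 [Hn2 Hp2]]]]].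
- exists β1, β2; by rewrite H1 H2.
- exfalso; rewrite Ev2 in H1; have := ep_born_size H1.
  by rewrite size_pref ltnNge Hn2.
- exfalso; rewrite Ev1 in H2; have := ep_born_size H2.
  by rewrite size_pref ltnNge Hn1.
rewrite Ev1 in Ev2; case: Ev2 => Ep _.
exists false, false; by rewrite Hp1 Hp2 Ep.
Qed.

End Tail.

Section Can.
Variable RS : repl_system.
Local Notation ER := (gE (Rg RS)).
Local Notation wrd := (word RS).
Local Notation ep := (@ep RS).
Local Notation Om := (Omega RS).
Local Notation XX := (X RS).
Hypothesis Hna : forall z : ER, ~ (gsrc z = ini RS /\ gtgt z = ter RS) /\
                  ~ (gsrc z = ter RS /\ gtgt z = ini RS).
Hypothesis Hit : ini RS <> ter RS.
Variables (zc y : ER) (c : bool).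
Hypothesis Hzc : endp zc c <> ini RS /\ endp zc c <> ter RS.
Hypothesis Hy : endp y false = roleV RS c \/ endp y true = roleV RS c.
Variables (y1 y2 : ER).
Hypothesis Hy12 : y1 <> y2.

Definition CanOn (f : XX -> XX) (w w' : wrd) :=
  forall t, f (proj (app w t)) = proj (app w' t).

Lemma can_ext f w w' s : CanOn f w w' -> CanOn f (ext w s) (ext w' s).
Proof. move=> H t; by rewrite !app_ext H. Qed.

Lemma can_comp f g w w' w'' : CanOn f w w' -> CanOn g w' w'' ->
  CanOn (fun x => g (f x)) w w''.
Proof. move=> H1 H2 t; by rewrite H1 H2. Qed.

Lemma can_id w : CanOn (fun x => x) w w.
Proof. by []. Qed.

Lemma can_inv f g w w' : CanOn f w w' -> (forall x, g (f x) = x) -> CanOn g w' w.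
Proof. move=> H Hg t; by rewrite -H Hg. Qed.

Lemma seqapp_inj s1 s2 (t : nat -> ER) :
  seqapp (s1 ++ [:: y1]) t = seqapp (s2 ++ [:: y1]) t ->
  seqapp (s1 ++ [:: y2]) t = seqapp (s2 ++ [:: y2]) t -> s1 = s2.
Proof.
have key : forall s1 s2, size s1 < size s2 ->
  seqapp (s1 ++ [:: y1]) t = seqapp (s2 ++ [:: y1]) t ->
  seqapp (s1 ++ [:: y2]) t = seqapp (s2 ++ [:: y2]) t -> False.
  move=> a b Hab E1 E2.
  have := f_equal (fun f => f (size a)) E1; have := f_equal (fun f => f (size a)) E2.
  rewrite /seqapp !size_cat /= !addn1 ltnSn (ltn_trans Hab (ltnSn _)).
  rewrite !nth_cat ltnn Hab subnn /= => Ea Eb; apply: Hy12; by rewrite Ea Eb.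
move=> E1 E2; case: (ltngtP (size s1) (size s2)) => Hs.
- by exfalso; apply: (key _ _ Hs E1 E2).
- by exfalso; apply: (key _ _ Hs (esym E1) (esym E2)).
apply: (@eq_from_nth _ y1) => // i Hi.
have := f_equal (fun f => f i) E1; rewrite /seqapp !size_cat /= -Hs.
rewrite (ltn_addr 1 Hi) !nth_cat -Hs Hi.
move=> E; rewrite (set_nth_default (t 0)) // E; apply: set_nth_default; by rewrite -Hs.
Qed.

Lemma can_uniq f w w1 w2 : CanOn f w w1 -> CanOn f w w2 -> w1 = w2.
Proof.
move=> H1 H2.
have K : forall yy, app (ext w2 [:: yy]) (patt zc y) = app (ext w1 [:: yy]) (patt zc y).
  move=> yy; apply: (rigid_app Hna Hit Hzc Hy).
  apply: proj_eq_sim; rewrite !app_ext -H1 -H2 //.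
have /= E1 := f_equal fst (K y1).
have /= E1' := f_equal snd (K y1).
have /= E2' := f_equal snd (K y2).
case: w1 w2 E1 E1' E2' {K H1 H2} => e1 s1 [e2 s2] /= -> E1 E2.
by rewrite (seqapp_inj E1 E2).
Qed.

Lemma deep_exists f : rearrangement f -> exists L C, forall w, L <= size w.2 ->
  exists w', CanOn f w w' /\ size w'.2 <= size w.2 + C.
Proof.
move=> [_ [cov [Hcov [_ Hcan]]]].
exists (\max_(cc <- cov) size cc.1.2), (\max_(cc <- cov) size cc.2.2) => w Hw.
set om := app (ext w [:: y1]) (patt zc y).
have [cc [Hin [om' [Hp Eom]]]] := Hcov (proj om).
have Eom' : om' = om.
  apply: (rigid_app Hna Hit Hzc Hy); exact: proj_eq_sim.
rewrite Eom' in Hp.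
have Hc1 : size cc.1.2 <= size w.2.
  apply: (leq_trans _ Hw). exact: (@leq_bigmax_seq _ cov xpredT (fun cc => size cc.1.2) cc Hin isT).
have Ew : cc.1 = (w.1, take (size cc.1.2) w.2).
  rewrite -{1}Hp /om pref_app_le; last by rewrite size_ext (leq_trans Hc1 (leq_addr _ _)).
  by rewrite /ext /= takel_cat.
have Hcc : CanOn f cc.1 cc.2.
  move=> t; have [_ H] := Hcan cc Hin; rewrite H; [by rewrite canon_app | exact: hasprefix_app].
exists (ext cc.2 (drop (size cc.1.2) w.2)); split.
  have Hw' : ext cc.1 (drop (size cc.1.2) w.2) = w.
    by rewrite {1}Ew /ext /= cat_take_drop -surjective_pairing.
  have := can_ext (drop (size cc.1.2) w.2) Hcc; by rewrite Hw'.
rewrite size_ext size_drop addnC leq_add ?leq_subr //.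
exact: (@leq_bigmax_seq _ cov xpredT (fun cc => size cc.2.2) cc Hin isT).
Qed.

End Can.

Definition pb (A : Prop) : bool := if excluded_middle_informative A then true else false.
Lemma pbP (A : Prop) : pb A <-> A.
Proof. rewrite /pb; case: excluded_middle_informative => //. Qed.

Section Build.
Variable RS : repl_system.
Local Notation E0 := (gE (G0 RS)).
Local Notation ER := (gE (Rg RS)).
Local Notation wrd := (word RS).

Definition minP (Q : wrd -> Prop) (w : wrd) :=
  Q w /\ forall j, j < size w.2 -> ~ Q (w.1, take j w.2).

Lemma mem_children (w v : wrd) :
  v \in [seq (w.1, rcons w.2 z) | z <- enum ER] <-> exists z, v = ext w [:: z].
Proof.
split.
  move/mapP => [z _ ->]; exists z; by rewrite /ext cats1.
move=> [z ->]; apply/mapP; exists z; by rewrite ?mem_enum // /ext cats1.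
Qed.

Lemma rep (Bad S : seq wrd) k : expansion S -> uniq Bad ->
  (forall w, w \in Bad -> w \in S /\ size w.2 = k) ->
  exists S', expansion S' /\ forall v, v \in S' <->
    (v \in S /\ v \notin Bad) \/ (exists w z, w \in Bad /\ v = ext w [:: z]).
Proof.
elim: Bad S => [|w Bad IH] S HS Hu Hall.
  exists S; split => // v; split; first by left.
  by case => [[]|[w [z [H _]]]].
move: Hu => /= /andP [Hw Hu].
have [HwS Hwk] := Hall w (mem_head _ _).
set S1 := [seq w' <- S | w' != w] ++ [seq (w.1, rcons w.2 z) | z <- enum ER].
have HS1 : expansion S1 by apply: expS.
have Hall1 : forall w', w' \in Bad -> w' \in S1 /\ size w'.2 = k.
  move=> w' Hw'; have [H1 H2] := Hall w' (etrans (in_cons _ _ _) (introT orP (or_intror Hw'))); split => //.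
  rewrite mem_cat mem_filter H1 andbT; apply/orP; left.
  by apply/eqP => E; move: Hw; rewrite -E Hw'.
have [S' [HS' Hm]] := IH S1 HS1 Hu Hall1.
exists S'; split => // v; rewrite Hm.
have Hsz : forall z, ext w [:: z] \notin Bad.
  move=> z; apply/negP => Hin; have [_ H] := Hall1 _ Hin.
  by move: H; rewrite size_ext /= Hwk addn1 => /eqP; rewrite -{2}(addn0 k) -addn1 eqn_add2l.
split.
  case => [[Hv1 Hv2]|[w' [z [Hw' ->]]]].
    move: Hv1; rewrite mem_cat mem_filter => /orP [/andP [Hne HvS]|Hch].
      left; split => //; by rewrite in_cons negb_or Hne.
    have [z ->] := (mem_children w v).1 Hch.
    right; exists w, z; split => //; exact: mem_head.
  right; exists w', z; split => //; by rewrite in_cons Hw' orbT.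
case => [[HvS]|[w' [z [Hw' ->]]]].
  rewrite in_cons negb_or => /andP [Hne Hnb]; left; split => //.
  by rewrite mem_cat mem_filter Hne HvS.
move: Hw'; rewrite in_cons => /orP [/eqP ->|Hb].
  left; split; last exact: Hsz.
  rewrite mem_cat; apply/orP; right; apply/mem_children; by exists z.
right; by exists w', z.
Qed.

Variable P : wrd -> Prop.

Definition Pk k (w : wrd) := P w \/ k <= size w.2.

Lemma minPk_size k w : minP (Pk k) w -> ~ P w -> size w.2 = k.
Proof.
move=> [[HP|Hk] Hmin] HnP //; apply/eqP; rewrite eqn_leq Hk andbT leqNgt.
apply/negP => Hlt; apply: (Hmin k Hlt); right; by rewrite /= size_take Hlt.
Qed.

Lemma take_ext1 (w : wrd) z j : j <= size w.2 -> take j (ext w [:: z]).2 = take j w.2.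
Proof. move=> H; by rewrite /ext /= takel_cat. Qed.

Lemma minPk_step k v : minP (Pk k.+1) v <->
  (minP (Pk k) v /\ P v) \/ (exists w z, (minP (Pk k) w /\ ~ P w) /\ v = ext w [:: z]).
Proof.
split.
  move=> [HPv Hmin]; case: (leqP (size v.2) k) => Hs.
    left; case: HPv => [HPv|Hk]; last by exfalso; move: (leq_trans Hk Hs); rewrite ltnn.
    split => //; split; first by left.
    move=> j Hj [H|H]; first by apply: (Hmin j Hj); left.
    move: H; rewrite /= size_take Hj => H; move: (leq_ltn_trans H (leq_trans Hj Hs)); by rewrite ltnn.
  have Hs1 : size v.2 = k.+1.
    apply/eqP; rewrite eqn_leq Hs andbT leqNgt; apply/negP => H.
    apply: (Hmin k.+1 H); right; by rewrite /= size_take H.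
  have Hd : size (drop k v.2) = 1 by rewrite size_drop Hs1 subSnn.
  case Edr: (drop k v.2) Hd => [|z [|z' s']] // _.
  have Ev : v = ext (v.1, take k v.2) [:: z].
    by rewrite /ext /= -Edr cat_take_drop -surjective_pairing.
  right; exists (v.1, take k v.2), z; split => //; split; last first.
    move=> /= HP; apply: (Hmin k); [by rewrite Hs1 | by left].
  split; first by right; rewrite /= size_take Hs1 ltnSn.
  move=> j; rewrite /= size_take Hs1 ltnSn => Hj [H|H].
    apply: (Hmin j); [by rewrite Hs1 ltnS ltnW | left; by rewrite take_takel ?(ltnW Hj) in H].
  move: H; rewrite /= size_take size_take Hs1 ltnSn Hj => H.
  by move: (leq_ltn_trans H Hj); rewrite ltnn.
case => [[[HPv Hmin] HP]|[w [z [[[HPw Hmin] HnP] ->]]]].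
  split; first by left.
  move=> j Hj [H|H]; apply: (Hmin j Hj); [by left | right; exact: ltnW H].
have Hw : size w.2 = k by apply: minPk_size.
split; first by right; rewrite size_ext Hw addn1.
move=> j; rewrite size_ext Hw addn1 ltnS => Hj.
rewrite take_ext1 ?Hw //= => [[H|H]].
  case: (ltngtP j k) Hj => // [Hjk|Hjk] _.
    apply: (Hmin j); [by rewrite Hw | by left].
  by apply: HnP; rewrite Hjk -Hw take_size -surjective_pairing in H.
move: H; rewrite size_take; case: ifP => _ H.
  by move: (leq_trans H Hj); rewrite ltnn.
by move: H; rewrite Hw ltnn.
Qed.
Lemma exp_build k : exists S, expansion S /\ forall w, w \in S <-> minP (Pk k) w.
Proof.
elim: k => [|k [S [HS Hm]]].
  exists [seq (e, [::]) | e <- enum E0]; split; first exact: exp0.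
  move=> w; split.
    move/mapP => [e _ ->]; split; [by right | by move=> j].
  move=> [_ Hmin]; apply/mapP; exists w.1; rewrite ?mem_enum //.
  case: w Hmin => e s /= Hmin; congr (_, _); case: s Hmin => // z s Hmin.
  by exfalso; apply: (Hmin 0) => //; right.
set Bad := undup [seq w <- S | ~~ pb (P w)].
have HBad : forall w, w \in Bad <-> w \in S /\ ~ P w.
  move=> w; rewrite mem_undup mem_filter; split.
    move/andP => [H1 H2]; split => // HP; move/negP: H1; apply; exact/pbP.
  move=> [H1 H2]; rewrite H1 andbT; apply/negP => /pbP; exact: H2.
have Hall : forall w, w \in Bad -> w \in S /\ size w.2 = k.
  move=> w /HBad [H1 H2]; split => //; apply: minPk_size => //; exact: (Hm w).1.
have [S' [HS' Hm']] := rep HS (undup_uniq _) Hall.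
exists S'; split => // v; rewrite Hm' minPk_step; split.
  case => [[H1 H2]|[w [z [Hw ->]]]].
    left; split; first exact: (Hm v).1.
    case: (classic (P v)) => // HnP; exfalso; move/negP: H2; apply; by apply/HBad.
  right; exists w, z; split => //; have [H1 H2] := (HBad w).1 Hw; split => //; exact: (Hm w).1.
case => [[H1 H2]|[w [z [[H1 H2] ->]]]].
  left; split; first exact: (Hm v).2.
  by apply/negP => /HBad [_ H].
right; exists w, z; split => //; apply/HBad; split => //; exact: (Hm w).2.
Qed.
End Build.



Section Main.
Variable RS : repl_system.
Local Notation E0 := (gE (G0 RS)).
Local Notation V0 := (gV (G0 RS)).
Local Notation ER := (gE (Rg RS)).
Local Notation VR := (gV (Rg RS)).
Local Notation wrd := (word RS).
Local Notation ep := (@ep RS).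
Local Notation Om := (Omega RS).
Local Notation XX := (X RS).
Hypothesis Hna : forall z : ER, ~ (gsrc z = ini RS /\ gtgt z = ter RS) /\
                  ~ (gsrc z = ter RS /\ gtgt z = ini RS).
Hypothesis Hit : ini RS <> ter RS.
Hypothesis HisoG : forall v : V0, exists e : E0, gsrc e = v \/ gtgt e = v.
Hypothesis HisoR : forall v : VR, exists z : ER, gsrc z = v \/ gtgt z = v.
Variables (zc y : ER) (c : bool).
Hypothesis Hzc : endp zc c <> ini RS /\ endp zc c <> ter RS.
Hypothesis Hy : endp y false = roleV RS c \/ endp y true = roleV RS c.
Variables (y1 y2 : ER).
Hypothesis Hy12 : y1 <> y2.
Variable zI : bool -> ER.
Hypothesis HzI : forall b, endp (zI b) false = roleV RS b \/ endp (zI b) true = roleV RS b.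

Variable H : (XX -> XX) -> Prop.
Hypothesis Hsub : forall f, H f -> rearrangement f.
Hypothesis H1 : H (fun x => x).
Hypothesis Hmul : forall f g, H f -> H g -> H (fun x => f (g x)).
Hypothesis Hinv : forall f, H f -> exists g, H g /\ (forall x, g (f x) = x) /\ (forall x, f (g x) = x).
Variables (M C : nat).
Hypothesis HD : forall f, H f -> forall w : wrd, M <= size w.2 ->
  exists w', CanOn f w w' /\ size w'.2 <= size w.2 + C.

Definition phi (f : XX -> XX) (w : wrd) : wrd :=
  match excluded_middle_informative (exists w' : wrd, CanOn f w w') with
  | left Hex => proj1_sig (constructive_indefinite_description _ Hex)
  | right _ => w
  end.

Lemma uniqC (f : XX -> XX) (w w1 w2 : wrd) : CanOn f w w1 -> CanOn f w w2 -> w1 = w2.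
Proof. exact: (can_uniq Hna Hit Hzc Hy Hy12). Qed.

Lemma phi_can (f : XX -> XX) (w w' : wrd) : CanOn f w w' -> phi f w = w'.
Proof.
move=> Hc; rewrite /phi; case: excluded_middle_informative => [Hex|Hn]; last first.
  by exfalso; apply: Hn; exists w'.
case: (constructive_indefinite_description _ Hex) => /= w'' H''.
exact: uniqC H'' Hc.
Qed.

Lemma phi_deep (f : XX -> XX) (w : wrd) : H f -> M <= size w.2 -> CanOn f w (phi f w).
Proof. move=> Hf Hw; have [w' [Hc _]] := HD Hf Hw; by rewrite (phi_can Hc). Qed.

Definition PP (v : wrd) := forall f, H f -> exists d : wrd, size d.2 = M /\ exists s, v = ext (phi f d) s.

Lemma PP_up (v : wrd) s : PP v -> PP (ext v s).
Proof.
move=> HP f Hf; have [d [Hd [s' ->]]] := HP f Hf; exists d; split => //; exists (s' ++ s).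
by rewrite ext_cat.
Qed.

Lemma PP_deep (v : wrd) : PP v -> M <= size v.2.
Proof.
move=> HP; have [d [Hd [s Ev]]] := HP _ H1.
rewrite (phi_can (can_id d)) in Ev; by rewrite Ev size_ext Hd leq_addr.
Qed.

Lemma PP_big (v : wrd) : M + C < size v.2 -> PP v.
Proof.
move=> Hv f Hf; have [h [Hh [Hhf Hfh]]] := Hinv Hf.
have HvM : M <= size v.2 by apply: leq_trans (ltnW Hv); rewrite leq_addr.
have [t [Hvt _]] := HD Hh HvM.
have Hft : CanOn f t v := can_inv Hvt Hfh.
case: (leqP M (size t.2)) => Ht.
  set d : wrd := (t.1, take M t.2).
  have Et : t = ext d (drop M t.2) by rewrite /ext /= cat_take_drop -surjective_pairing.
  have Hd : size d.2 = M by rewrite /= size_takel.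
  exists d; split => //; exists (drop M t.2).
  apply: (uniqC Hft); rewrite {1}Et; apply: can_ext; apply: phi_deep => //; by rewrite Hd.
exfalso.
set d := ext t (nseq (M - size t.2) y1).
have Hd : size d.2 = M by rewrite size_ext size_nseq subnKC // ltnW.
have [w' [Hdw' Hs]] := HD Hf (eq_leq (esym Hd)).
have E := uniqC Hdw' (can_ext (nseq (M - size t.2) y1) Hft).
move: Hs; rewrite E size_ext Hd => Hs.
have := leq_ltn_trans (leq_trans (leq_addr _ _) Hs) Hv; by rewrite ltnn.
Qed.


Lemma PP_inv (g : XX -> XX) (v : wrd) : H g -> PP v -> PP (phi g v).
Proof.
move=> Hg HP f Hf; have [gi [Hgi [Hgig Hggi]]] := Hinv Hg.
have Hh := Hmul Hgi Hf.
have [d [Hd [s Ev]]] := HP _ Hh.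
have HdM : M <= size d.2 by rewrite Hd.
have Hc : CanOn g (phi (fun x => gi (f x)) d) (phi f d).
  move=> t; rewrite -(phi_deep Hh HdM t) /= Hggi; exact: (phi_deep Hf HdM t).
exists d; split => //; exists s; apply: phi_can; rewrite Ev; exact: can_ext.
Qed.

Lemma take_mkseq (f : nat -> ER) j m : j <= m -> take j (mkseq f m) = mkseq f j.
Proof. move=> Hjm; by rewrite /mkseq -map_take take_iota (minn_idPl Hjm). Qed.

Lemma E_inv (g : XX -> XX) (v : wrd) : H g -> minP PP v -> minP PP (phi g v).
Proof.
move=> Hg [HPv Hmin]; split; first exact: PP_inv.
move=> j Hj Hq; have [gi [Hgi [Hgig Hggi]]] := Hinv Hg.
set u := phi g v in Hj Hq *.
set q : wrd := (u.1, take j u.2) in Hq.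
have Hvu : CanOn g v u := phi_deep Hg (PP_deep HPv).
have Huv : CanOn gi u v := can_inv Hvu Hgig.
have Eu : u = ext q (drop j u.2) by rewrite /ext /= cat_take_drop -surjective_pairing.
have Hq' := phi_deep Hgi (PP_deep Hq).
have Ev : v = ext (phi gi q) (drop j u.2).
  apply: (uniqC Huv); rewrite {1}Eu; exact: can_ext.
have HPq' := PP_inv Hgi Hq.
apply: (Hmin (size (phi gi q).2)).
  rewrite Ev size_ext -{1}(addn0 (size _)) ltn_add2l size_drop subn_gt0 //.
have -> : (v.1, take (size (phi gi q).2) v.2) = phi gi q.
  by rewrite {1 2}Ev /ext /= take_size_cat // -surjective_pairing.
exact: HPq'.
Qed.

Lemma phi_inv (g gi : XX -> XX) (w : wrd) : H g -> (forall x, gi (g x) = x) ->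
  M <= size w.2 -> phi gi (phi g w) = w.
Proof. move=> Hg Hgig Hw; apply: phi_can; apply: can_inv (phi_deep Hg Hw) Hgig. Qed.

Lemma complete (om : Om) : exists w, minP PP w /\ hasprefix om w.
Proof.
have Hex : exists j, pb (PP (pref om j)).
  exists (M + C).+1; apply/pbP; apply: PP_big; by rewrite size_pref.
case: (ex_minnP Hex) => m /pbP Hm Hmin.
exists (pref om m); split; last by rewrite /hasprefix size_pref.
split => // j; rewrite size_pref => Hj HP.
have HP' : PP (pref om j) by move: HP; rewrite /pref /= take_mkseq // ltnW.
move: (Hmin j ((pbP _).2 HP')); by rewrite leqNgt Hj.
Qed.

Lemma prefix_free (w : wrd) s : minP PP w -> minP PP (ext w s) -> s = [::].
Proof.
case: s => // z s [HPw _] [_ Hmin]; exfalso.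
apply: (Hmin (size w.2)); first by rewrite size_ext -{1}(addn0 (size _)) ltn_add2l.
by rewrite /ext /= take_size_cat // -surjective_pairing.
Qed.

Variable S : seq wrd.
Hypothesis HS : forall w, w \in S <-> minP PP w.

Lemma end_vtx (w : wrd) b : w \in S -> is_vtx S (ep w b).
Proof.
move=> Hw; case Ee: (ep w b) => [v|[p u]] //=.
have [Hp1 [[z [s Hs]] [Hu1 Hu2]]] := ep_born Ee.
split; first by apply/eqP.
split; first by apply/eqP.
exists w; split => //; split; first by rewrite Hp1.
split; first by rewrite Hs size_cat /= addnS ltnS leq_addr.
by rewrite Hs take_size_cat.
Qed.

Lemma vtx_end p : is_vtx S p -> exists w b, w \in S /\ ep w b = p.
Proof.
case: p => [v|[w0 u]] /=.
  move=> _; have [e He] := HisoG v.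
  set b := if gsrc e == v then false else true.
  have Eb : ep (e, [::]) b = inl v.
    rewrite ep_nil /b; case: eqP => [->//|Hn]; case: He => He //; by rewrite He.
  have [w [Hw Hp]] := complete (app (e, [::]) (TT zI b)).
  rewrite -Hp pref_app_ge // in Hw.
  exists (ext (e, [::]) (mkseq (TT zI b) (size w.2 - 0))), (st zI b (size w.2 - 0)).
  split; first by apply/HS.
  by rewrite (tailV Hit HzI).
move=> [Hu1 [Hu2 [w' [Hw' [E1 [Hlt Htk]]]]]].
have [z Hz] := HisoR u.
set β := if gsrc z == u then false else true.
have Eβ : endp z β = u.
  rewrite /β /endp; case: eqP => [->//|Hn]; case: Hz => Hz //; by rewrite Hz.
have Ez : ep (ext w0 [:: z]) β = inr (w0, u).
  rewrite ep_ext1 /stepv Eβ; case: eqP => // _; case: eqP => //.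
have [w [Hw Hp]] := complete (app (ext w0 [:: z]) (TT zI β)).
case: (leqP (size w.2) (size w0.2)) => Hs.
  exfalso.
  have Ew : w = (w'.1, take (size w.2) w'.2).
    rewrite -{1}Hp pref_app_le; last by rewrite size_ext (leq_trans Hs (leq_addr _ _)).
    by rewrite /ext /= takel_cat // -E1 -Htk take_takel.
  have [_ Hmin] := (HS w').1 Hw'.
  apply: (Hmin (size w.2)); first exact: leq_ltn_trans Hs Hlt.
  by rewrite -Ew; case: Hw.
have Hs' : size (ext w0 [:: z]).2 <= size w.2 by rewrite size_ext addn1.
move: Hw; rewrite -Hp (pref_app_ge _ Hs') => Hw.
exists (ext (ext w0 [:: z]) (mkseq (TT zI β) (size w.2 - size (ext w0 [:: z]).2))).
exists (st zI β (size w.2 - size (ext w0 [:: z]).2)).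
split; first by apply/HS.
by rewrite (tailV Hit HzI).
Qed.


Lemma welldef (g : XX -> XX) (w w' : wrd) b b' : H g -> w \in S -> w' \in S ->
  ep w b = ep w' b' -> ep (phi g w) b = ep (phi g w') b'.
Proof.
move=> Hg Hw Hw' E.
have Hs := sim_proj Hna (sim_conv Hit HzI E).
have Hdw := phi_deep Hg (PP_deep ((HS w).1 Hw).1).
have Hdw' := phi_deep Hg (PP_deep ((HS w').1 Hw').1).
apply: (conv_unique Hna Hit HzI); apply: proj_eq_sim.
by rewrite -Hdw -Hdw' Hs.
Qed.

Definition tau (g : XX -> XX) (p : vtx RS) : vtx RS :=
  match excluded_middle_informative (exists wb : wrd * bool, wb.1 \in S /\ ep wb.1 wb.2 = p) with
  | left Hx => let wb := proj1_sig (constructive_indefinite_description _ Hx) in ep (phi g wb.1) wb.2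
  | right _ => p
  end.

Lemma tau_ep (g : XX -> XX) (w : wrd) b : H g -> w \in S -> tau g (ep w b) = ep (phi g w) b.
Proof.
move=> Hg Hw; rewrite /tau; case: excluded_middle_informative => [Hx|Hn]; last first.
  by exfalso; apply: Hn; exists (w, b).
case: (constructive_indefinite_description _ Hx) => [[w1 b1] /= [H1' H2']].
exact: welldef.
Qed.

Lemma S_inv (g : XX -> XX) (w : wrd) : H g -> w \in S -> phi g w \in S.
Proof. move=> Hg /HS Hw; apply/HS; exact: E_inv. Qed.

Lemma in_Aut_S (g : XX -> XX) : H g -> in_Aut S g.
Proof.
move=> Hg; have [gi [Hgi [Hgig Hggi]]] := Hinv Hg.
split; first exact: Hsub.
have Hdeep : forall w, w \in S -> M <= size w.2 by move=> w /HS [/PP_deep].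
exists (phi g); split; last first.
  move=> w Hw om Hom; rewrite (hasprefix_eq Hom) canon_app; exact: (phi_deep Hg (Hdeep w Hw)).
exists (tau g); split; [|split].
- exists (phi gi) => t Ht; split; first exact: S_inv.
  split; first exact: S_inv.
  split; first exact: phi_inv (Hdeep t Ht).
  exact: phi_inv (Hdeep t Ht).
- exists (tau gi) => p Hp; have [w [b [Hw <-]]] := vtx_end Hp.
  rewrite !tau_ep //; try exact: S_inv.
  split; first by apply: end_vtx; exact: S_inv.
  split; first by apply: end_vtx; exact: S_inv.
  rewrite (phi_inv Hg Hgig (Hdeep w Hw)).
  split => //.
  by rewrite (phi_inv Hgi Hggi (Hdeep w Hw)).
move=> w Hw b; by rewrite tau_ep.
Qed.

End Main.



Lemma minP_ext (RS : repl_system) (Q1 Q2 : word RS -> Prop) w :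
  (forall v, Q1 v <-> Q2 v) -> minP Q1 w <-> minP Q2 w.
Proof.
move=> E; rewrite /minP; split => [[H1 H2]|[H1 H2]]; split; first by apply/E.
- move=> j Hj HQ; apply: (H2 j Hj); by apply/E.
- by apply/E.
- move=> j Hj HQ; apply: (H2 j Hj); by apply/E.
Qed.

Theorem theorem2p9 (RS : repl_system) (Hexp : expanding RS)
  (H : (X RS -> X RS) -> Prop)
  (Hsub : forall f, H f -> rearrangement f)
  (H1 : H (fun x => x))
  (Hmul : forall f g, H f -> H g -> H (fun x => f (g x)))
  (Hinv : forall f, H f -> exists g, H g /\ (forall x, g (f x) = x) /\ (forall x, f (g x) = x))
  (Hfin : exists (n : nat) (l : nat -> X RS -> X RS), forall f, H f -> exists i, i < n /\ f = l i) :
  exists S : seq (word RS), expansion S /\ forall f, H f -> in_Aut S f.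
Proof.
move: Hexp => [Hit [HisoG [HisoR [Hna [H3 H2]]]]].
have [y1 [y2 Hy12]] : exists y1 y2 : gE (Rg RS), y1 <> y2.
  case/card_gt1P: H2 => a [b [_ _ Hab]]; exists a, b; exact/eqP.
have [m [Hm1 Hm2]] : exists m : gV (Rg RS), m <> ini RS /\ m <> ter RS.
  case/card_gt2P: H3 => a [b [d [_ [/eqP Hab /eqP Hbd /eqP Hda]]]].
  case: (classic (a = ini RS \/ a = ter RS)) => Ha; last first.
    exists a; split => E; apply: Ha; by [left|right].
  case: (classic (b = ini RS \/ b = ter RS)) => Hb; last first.
    exists b; split => E; apply: Hb; by [left|right].
  exists d; split => E; subst d.
  - case: Ha => Ha; case: Hb => Hb; subst; try done; by apply: Hit.
  - case: Ha => Ha; case: Hb => Hb; subst; try done; by apply: Hit.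
have [zc Hzc0] := HisoR m.
set c := if gsrc zc == m then false else true.
have Ezc : endp zc c = m.
  rewrite /c /endp; case: eqP => [->//|Hn]; case: Hzc0 => Hz //; by rewrite Hz.
have Hzc : endp zc c <> ini RS /\ endp zc c <> ter RS by rewrite Ezc.
have [y Hy] := HisoR (roleV RS c).
have Hy' : endp y false = roleV RS c \/ endp y true = roleV RS c by [].
set zI := fun b => proj1_sig (constructive_indefinite_description _ (HisoR (roleV RS b))).
have HzI : forall b, endp (zI b) false = roleV RS b \/ endp (zI b) true = roleV RS b.
  move=> b; rewrite /zI; by case: (constructive_indefinite_description _ _).
have [M [C HD]] : exists M C, forall f, H f -> forall w : word RS, M <= size w.2 ->
    exists w', CanOn f w w' /\ size w'.2 <= size w.2 + C.
  case: Hfin => n [l Hl].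
  have mono : forall f M M' C C', M <= M' -> C <= C' ->
     (forall w : word RS, M <= size w.2 -> exists w', CanOn f w w' /\ size w'.2 <= size w.2 + C) ->
     (forall w : word RS, M' <= size w.2 -> exists w', CanOn f w w' /\ size w'.2 <= size w.2 + C').
    move=> f M M' C C' HM HC Hd w Hw; have [w' [Hc Hs]] := Hd w (leq_trans HM Hw).
    exists w'; split => //; apply: leq_trans Hs _; by rewrite leq_add2l.
  have : exists M C, forall i, i < n -> H (l i) -> forall w : word RS, M <= size w.2 ->
    exists w', CanOn (l i) w w' /\ size w'.2 <= size w.2 + C.
    elim: n {Hl} => [|n [M [C IH]]]; first by exists 0, 0.
    case: (classic (H (l n))) => Hn; last first.
      exists M, C => i; rewrite ltnS leq_eqVlt => /orP [/eqP ->|Hi] //.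
      exact: IH.
    have [L [C' HL]] := deep_exists Hna Hit Hzc Hy' y1 (Hsub _ Hn).
    exists (maxn M L), (maxn C C') => i; rewrite ltnS leq_eqVlt => /orP [/eqP ->|Hi] Hli.
      by apply: mono (leq_maxr _ _) (leq_maxr _ _) HL.
    by apply: mono (leq_maxl _ _) (leq_maxl _ _) (IH i Hi Hli).
  move=> [M [C Hd]]; exists M, C => f Hf; have [i [Hi Ef]] := Hl f Hf.
  rewrite Ef; apply: Hd => //; by rewrite -Ef.
have [S [HS Hmem]] := exp_build (PP H M) (M + C).+1.
have HS' : forall w, w \in S <-> minP (PP H M) w.
  move=> w; rewrite Hmem; apply: minP_ext => v; split => [[//|Hv]|Hv]; last by left.
  apply: (PP_big Hna Hit Hzc Hy' Hy12 Hinv HD); exact: Hv.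
exists S; split => // f Hf.
exact: (in_Aut_S Hna Hit HisoG HisoR Hzc Hy' Hy12 HzI Hsub H1 Hmul Hinv HD HS' Hf).
Qed.
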